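(* Let $L\geq 1$ be an integer, $P\geq 0$, and $p_B\in[0,1]$. Let $\beta_1,\ldots,\beta_L$ be i.i.d. random variables with $\mathbb{P}(\beta_l=0)=p_B$, $\mathbb{P}(\beta_l=1)=1-p_B$, and let $\theta_1,\ldots,\theta_L$ be i.i.d. $\mathrm{Uniform}(0,2\pi)$ random variables independent of $\boldsymbol{\beta}=(\beta_1,\ldots,\beta_L)$. Set $h_l=\beta_l e^{j\theta_l}$, $\mathbf{h}=[h_1,\ldots,h_L]^{\mathsf T}$, and $\alpha=\sum_{l=1}^L\beta_l$ (so $\alpha\sim\mathrm{Binomial}(L,1-p_B)$). Let $\mathcal{Q}$ be the set of functions $\mathbf{Q}$ mapping each $\mathbf{b}\in\{0,1\}^L$ to a complex Hermitian positive semidefinite $L\times L$ matrix $\mathbf{Q}(\mathbf{b})$ with $[\mathbf{Q}(\mathbf{b})]_{l,l}\leq P$ for all $l\in\{1,\ldots,L\}$. Then $$\sup_{\mathbf{Q}\in\mathcal{Q}}\mathbb{E}\big[\log(1+\mathbf{h}^{\mathsf H}\mathbf{Q}(\boldsymbol{\beta})\mathbf{h})\big]=\mathbb{E}[\log(1+\alpha P)].$$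
   Context: This quantity is the ergodic capacity of a multi-point intermittent block fading channel $y=\sum_{l}h_l x_l+z$ with unit-variance complex Gaussian noise, perfect channel knowledge at the receiver, knowledge of the blockage state $\boldsymbol{\beta}$ at the transmitters, and per-transmitter power constraint $P$. Here $\beta_l$ has the stationary distribution of a binary Markov blockage chain, with $p_B$ the blockage probability. $\log$ is the logarithm in a fixed base (e.g. base 2); $\mathbf{h}^{\mathsf H}$ is the conjugate transpose. *)

(* Defs.v *)
From HB Require Import structures.
From mathcomp Require Import all_boot all_order all_algebra.
From mathcomp Require Import sesquilinear.
From mathcomp Require Import all_classical all_reals all_analysis.
From mathcomp Require Import complex.

Set Implicit Arguments.
Unset Strict Implicit.
Unset Printing Implicit Defensive.

Import Order.TTheory GRing.Theory Num.Theory.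
Local Open Scope ring_scope.
Local Open Scope classical_set_scope.
Local Open Scope complex_scope.

Section Channel.
Variable R : realType.
Variable L : nat.

(* blockage states b in {0,1}^L, encoded as boolean functions (true = 1) *)
Definition bstate := {ffun 'I_L -> bool}.

Definition prob_beta (pB : R) (b : bstate) : R :=
  \prod_(l < L) (if b l then 1 - pB else pB).

Definition hvec (b : bstate) (th : nat -> R) : 'cV[R[i]]_L :=
  \col_(l < L) (if b l then (cos (th l) +i* sin (th l)) else 0).

Definition quadform (Q : 'M[R[i]]_L) (h : 'cV[R[i]]_L) : R[i] :=
  ((map_mx conjc h)^T *m Q *m h) 0 0.

Definition psd (Q : 'M[R[i]]_L) : Prop :=
  Q \is hermsymmx /\
  forall v : 'cV[R[i]]_L, 0 <= ((map_mx conjc v)^T *m Q *m v) 0 0.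

Definition admissible (P : R) (Q : bstate -> 'M[R[i]]_L) : Prop :=
  forall b : bstate, psd (Q b) /\ forall l : 'I_L, Q b l l <= P%:C.

(* Expectation over theta_1..theta_n i.i.d. Uniform(0, 2 pi):
   iterated Lebesgue integral, normalised by 1/(2 pi) in each coordinate. *)
Fixpoint unif_avg (n : nat) (f : (nat -> R) -> R) : R :=
  match n with
  | O => f (fun _ => 0)
  | n'.+1 => (2 * pi)^-1 *
      Rintegral (@lebesgue_measure R) `[0, 2 * pi]%classic
        (fun x : R => unif_avg n' (fun t => f (fun k => if k == n' then x else t k)))
  end.

(* E[ log(1 + h^H Q(beta) h) ]  (natural log; the base only rescales both sides) *)
Definition ergodic_rate (pB : R) (Q : bstate -> 'M[R[i]]_L) : R :=
  \sum_(b : bstate) prob_beta pB b *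
     unif_avg L (fun th => ln (1 + complex.Re (quadform (Q b) (hvec b th)))).

Definition rhs_rate (pB P : R) : R :=
  \sum_(b : bstate) prob_beta pB b * ln (1 + (\sum_(l < L) (b l : nat))%:R * P).

End Channel.

(* Main.v *)
Require Import Defs.
From HB Require Import structures.
From mathcomp Require Import all_boot all_order all_algebra.
From mathcomp Require Import sesquilinear.
From mathcomp Require Import all_classical all_reals all_analysis.
From mathcomp Require Import complex.
From mathcomp Require Import ring lra.
Import Order.TTheory GRing.Theory Num.Theory.
Import numFieldNormedType.Exports.
Local Open Scope ring_scope.
Local Open Scope classical_set_scope.
Section Avg.
Variable R : realType.
Local Notation mu := (@lebesgue_measure R).
Definition I02 : set R := `[0, 2 * pi]%classic.
Definition avgf (g : R -> R) : R := (2 * pi)^-1 * Rintegral mu I02 g.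

Lemma pi2_gt0 : 0 < 2 * pi :> R.
Proof. by rewrite mulr_gt0// pi_gt0. Qed.

Lemma mI02 : measurable I02.
Proof. exact: measurable_itv. Qed.

Lemma muI02 : fine (mu I02) = 2 * pi.
Proof. by rewrite /I02 lebesgue_measure_itv/= lte_fin pi2_gt0 /= subr0. Qed.

Lemma cont_int (g : R -> R) : continuous g -> mu.-integrable I02 (EFin \o g).
Proof.
move=> cg; apply: continuous_compact_integrable; first exact: segment_compact.
exact: continuous_subspaceT.
Qed.

Lemma ge0_le_integral_nm (D : set R) (f1 f2 : R -> \bar R) :
  (forall x, D x -> (0 <= f1 x)%E) -> (forall x, D x -> (f1 x <= f2 x)%E) ->
  (\int[mu]_(x in D) f1 x <= \int[mu]_(x in D) f2 x)%E.
Proof.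
move=> f10 f12.
have f20 x : D x -> (0 <= f2 x)%E by move=> Dx; exact: le_trans (f10 _ Dx) (f12 _ Dx).
rewrite !ge0_integralE//.
apply: le_ereal_sup => _ [h hf1 <-]; exists h => //= x.
apply: (le_trans (hf1 x)); rewrite /patch; case: ifP => // /[1!inE] Dx.
exact: f12.
Qed.

Lemma le_Rint_nm (F G : R -> R) : (forall x, 0 <= F x) -> (forall x, F x <= G x) ->
  mu.-integrable I02 (EFin \o G) ->
  Rintegral mu I02 F <= Rintegral mu I02 G.
Proof.
move=> F0 FG iG; rewrite /Rintegral.
have le : (\int[mu]_(x in I02) (F x)%:E <= \int[mu]_(x in I02) (G x)%:E)%E.
  by apply: ge0_le_integral_nm => x _; rewrite lee_fin.
have fG : (\int[mu]_(x in I02) (G x)%:E)%E \is a fin_num.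
  by apply: integrable_fin_num; [exact: mI02|exact: iG].
have F0' : (0 <= \int[mu]_(x in I02) (F x)%:E)%E.
  by apply: integral_ge0 => x _; rewrite lee_fin.
apply: fine_le => //; rewrite ge0_fin_numE//.
apply: (le_lt_trans le); rewrite -ge0_fin_numE//; exact: (le_trans F0' le).
Qed.

Lemma avgf_le (F G : R -> R) : (forall x, 0 <= F x) -> (forall x, F x <= G x) ->
  mu.-integrable I02 (EFin \o G) -> avgf F <= avgf G.
Proof.
move=> F0 FG iG; rewrite /avgf ler_pM2l ?invr_gt0 ?pi2_gt0//.
exact: le_Rint_nm.
Qed.

Lemma avgf_ge0 (F : R -> R) : (forall x, 0 <= F x) -> 0 <= avgf F.
Proof.
move=> F0; rewrite /avgf; apply: mulr_ge0; first by rewrite invr_ge0 ltW ?pi2_gt0.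
by apply: fine_ge0; apply: integral_ge0 => x _; rewrite lee_fin.
Qed.

Lemma avg_ge0 n (f : (nat -> R) -> R) : (forall t, 0 <= f t) -> 0 <= unif_avg n f.
Proof.
elim: n f => [|n IH] f f0 //=.
rewrite -/(avgf _); apply: avgf_ge0 => x; exact: IH.
Qed.

Lemma avgf_cst c : avgf (fun _ => c) = c.
Proof.
rewrite /avgf Rintegral_cst ?muI02; last exact: mI02.
by rewrite mulrCA mulVf ?mulr1 // gt_eqF // pi2_gt0.
Qed.

Lemma two_pi : 2 * pi = pi *+ 2 :> R.
Proof. by rewrite mulr_natl. Qed.

Lemma avgf_cos : avgf cos = 0.
Proof.
rewrite /avgf /Rintegral /I02 (@continuous_FTC2 _ _ sin) ?pi2_gt0//.
- by rewrite two_pi sin2pi sin0 subee//= mulr0.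
- exact/continuous_subspaceT/continuous_cos.
- split.
  + by move=> x _; exact: derivable_sin.
  + by apply: cvg_at_right_filter; exact: continuous_sin.
  + by apply: cvg_at_left_filter; exact: continuous_sin.
- by move=> x _; rewrite derive1E derive_val.
Qed.

Lemma avgf_sin : avgf sin = 0.
Proof.
rewrite /avgf /Rintegral /I02 (@continuous_FTC2 _ _ (- cos)) ?pi2_gt0//.
- by rewrite two_pi /= !fctE cos2pi cos0 subrr mulr0.
- exact/continuous_subspaceT/continuous_sin.
- split.
  + by move=> x _; exact/derivableN/derivable_cos.
  + by apply: cvgN; apply: cvg_at_right_filter; exact: continuous_cos.
  + by apply: cvgN; apply: cvg_at_left_filter; exact: continuous_cos.
- by move=> x _; rewrite derive1E deriveN// derive_val opprK.
Qed.

Fixpoint allP {I : Type} (P : I -> Prop) (r : seq I) : Prop :=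
  match r with [::] => True | i :: r' => P i /\ allP P r' end.

Lemma cont_sum (I : Type) (r : seq I) (c : I -> R) (g : I -> R -> R) :
  allP (fun i => continuous (g i)) r ->
  continuous (fun x => \sum_(i <- r) c i * g i x).
Proof.
elim: r => [|i r IH] cg.
  under eq_fun do rewrite big_nil. exact: cst_continuous.
case: cg => cgi cg.
under eq_fun do rewrite big_cons.
move=> x.
apply: (@continuousD _ _ _ (fun x => c i * g i x) (fun x => \sum_(j <- r) c j * g j x)) => //.
apply: (@continuousM _ _ (fun _ => c i) (g i)); first exact: cst_continuous.
exact: cgi.
exact: IH.
Qed.

Lemma avgf_lin (I : Type) (r : seq I) (c : I -> R) (g : I -> R -> R) :
  allP (fun i => continuous (g i)) r ->
  avgf (fun x => \sum_(i <- r) c i * g i x) = \sum_(i <- r) c i * avgf (g i).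
Proof.
elim: r => [|i r IH] cg.
  under eq_fun do rewrite big_nil. by rewrite avgf_cst big_nil.
case: cg => cgi cg; move: IH => /(_ cg) IH.
under eq_fun do rewrite big_cons.
have i1 := cont_int _ (@cont_sum _ r c g cg).
have i2 : mu.-integrable I02 (EFin \o (fun x => c i * g i x)).
  apply: cont_int => x.
  apply: (@continuousM _ _ (fun _ => c i) (g i)); [exact: cst_continuous|exact: cgi].
rewrite big_cons -IH /avgf RintegralD; [|exact: mI02|exact: i2|exact: i1].
rewrite RintegralZl; [|exact: mI02|exact: cont_int].
by rewrite mulrDr mulrCA.
Qed.

Lemma unif_avgS n (f : (nat -> R) -> R) :
  unif_avg n.+1 f =
  avgf (fun x => unif_avg n (fun t => f (fun k => if k == n then x else t k))).
Proof. by []. Qed.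

Lemma unif_avg_ext n (f g : (nat -> R) -> R) :
  (forall t, f t = g t) -> unif_avg n f = unif_avg n g.
Proof. by move=> fg; congr unif_avg; apply/funext. Qed.

Variable M : nat.
Definition term := (R * (nat -> R -> R))%type.
Definition tps (s : seq term) (t : nat -> R) : R :=
  \sum_(p <- s) p.1 * \prod_(k < M) p.2 k (t k).
Definition allc (s : seq term) : Prop := allP (fun p : term => forall k, continuous (p.2 k)) s.
Definition val n (s : seq term) : R :=
  \sum_(p <- s) p.1 * \prod_(k < M) (if (k < n)%N then avgf (p.2 k) else p.2 k 0).

Lemma prod_split (F : 'I_M -> R) u n :
  \prod_(k < M) (if (k : nat) == n then u else F k) =
  (if (n < M)%N then u else 1) * \prod_(k < M) (if (k : nat) == n then 1 else F k).
Proof.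
rewrite -[X in _ = X * _](_ : \prod_(k < M) (if (k : nat) == n then u else 1) = _).
  by rewrite -big_split /=; apply: eq_bigr => k _; case: eqP; rewrite ?mulr1 ?mul1r.
case: ltnP => nM.
  rewrite (bigD1 (Ordinal nM)) //= eqxx big1 ?mulr1 // => k kn.
  case: eqP => // kn'; move: kn; suff -> : k = Ordinal nM by rewrite eqxx.
  by apply: val_inj.
apply: big1 => k _; case: eqP => // kn; move: (ltn_ord k); rewrite kn.
by rewrite ltnNge nM.
Qed.

Definition subs n x (s : seq term) : seq term :=
  map (fun p => (p.1, fun k => if k == n then (fun _ => p.2 n x) else p.2 k)) s.

Lemma allc_subs n x s : allc s -> allc (subs n x s).
Proof.
elim: s => [//|p s IH] /= [cp cs]; split; last exact: IH.
move=> k /=; case: eqP => _; [exact: cst_continuous|exact: cp].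
Qed.

Lemma tps_subs n x s t :
  tps s (fun k => if k == n then x else t k) = tps (subs n x s) t.
Proof.
rewrite /tps big_map; apply: eq_bigr => p _ /=; congr (_ * _).
by apply: eq_bigr => k _; case: eqP => // ->.
Qed.

Definition eP n (p : term) (k : 'I_M) := if (k < n)%N then avgf (p.2 k) else p.2 k 0.
Definition EP n (p : term) := \prod_(k < M) (if (k : nat) == n then 1 else eP n p k).
Definition psiP n (p : term) x := if (n < M)%N then p.2 n x else 1.

Lemma val_subs n x s : val n (subs n x s) = \sum_(p <- s) (p.1 * EP n p) * psiP n p x.
Proof.
rewrite /val big_map; apply: eq_bigr => p _ /=.
rewrite -mulrA; congr (_ * _); rewrite /psiP /EP mulrC -prod_split.
apply: eq_bigr => k _; case: eqP => [->|kn]; first by rewrite ltnn.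
by [].
Qed.

Lemma cont_psi n s : allc s -> allP (fun p => continuous (psiP n p)) s.
Proof.
rewrite /psiP; case: ltnP => _; elim: s => [//|q s' IHs] /= [cq cs'];
  (split; [|exact: IHs]); [exact: cq|exact: cst_continuous].
Qed.

Lemma val_S n s : val n.+1 s = \sum_(p <- s) (p.1 * EP n p) * avgf (psiP n p).
Proof.
rewrite /val; apply: eq_bigr => p _; rewrite -mulrA; congr (_ * _).
rewrite (eq_bigr (fun k : 'I_M => if (k : nat) == n then avgf (p.2 n) else eP n p k)); last first.
  by move=> k _; rewrite /eP ltnS leq_eqVlt; case: eqP => [->|].
rewrite prod_split mulrC; congr (_ * _); rewrite /psiP.
by case: ltnP => _ //=; rewrite avgf_cst.
Qed.

Lemma avg_tps n s : allc s -> unif_avg n (tps s) = val n s.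
Proof.
elim: n s => [|n IH] s cs.
  by rewrite /val /tps /=; apply: eq_bigr => p _; congr (_ * _);
    apply: eq_bigr => k _; rewrite ltn0.
rewrite unif_avgS.
have -> : (fun x => unif_avg n (fun t => tps s (fun k => if k == n then x else t k)))
   = (fun x => \sum_(p <- s) (p.1 * EP n p) * psiP n p x).
  apply/funext => x.
  rewrite (@unif_avg_ext n _ (tps (subs n x s))); last by move=> t; exact: tps_subs.
  by rewrite IH ?val_subs //; exact: allc_subs.
by rewrite avgf_lin ?val_S //; exact: cont_psi.
Qed.

Lemma avg_le n (f : (nat -> R) -> R) s : allc s -> (forall t, 0 <= f t) ->
  (forall t, f t <= tps s t) -> unif_avg n f <= val n s.
Proof.
elim: n f s => [|n IH] f s cs f0 fs.
  by rewrite -(avg_tps 0 s cs) /=; exact: fs.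
rewrite unif_avgS val_S -avgf_lin; last exact: cont_psi.
apply: avgf_le.
- by move=> x; apply: avg_ge0 => t; exact: f0.
- move=> x; rewrite -val_subs; apply: IH; first exact: allc_subs.
    by move=> t; exact: f0.
  by move=> t; rewrite -tps_subs; exact: fs.
- have := (cont_int _ (@cont_sum _ s (fun p => p.1 * EP n p) _ (cont_psi n s cs))); exact.
Qed.

Lemma allP_cat (I : Type) (P : I -> Prop) (s1 s2 : seq I) :
  allP P s1 -> allP P s2 -> allP P (s1 ++ s2).
Proof. by elim: s1 => [//|x s1 IH] /= [px p1] p2; split => //; exact: IH. Qed.

Lemma tps_cat s1 s2 t : tps (s1 ++ s2) t = tps s1 t + tps s2 t.
Proof. by rewrite /tps big_cat. Qed.

Lemma val_cat n s1 s2 : val n (s1 ++ s2) = val n s1 + val n s2.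
Proof. by rewrite /val big_cat. Qed.

Definition scale (c : R) (s : seq term) : seq term := map (fun p => (c * p.1, p.2)) s.

Lemma tps_scale c s t : tps (scale c s) t = c * tps s t.
Proof. by rewrite /tps big_map mulr_sumr; apply: eq_bigr => p _; rewrite mulrA. Qed.

Lemma val_scale n c s : val n (scale c s) = c * val n s.
Proof. by rewrite /val big_map mulr_sumr; apply: eq_bigr => p _; rewrite mulrA. Qed.

Lemma allc_scale c s : allc s -> allc (scale c s).
Proof. by elim: s => [//|p s IH] /= [cp cs]; split => //; exact: IH. Qed.

Definition one : nat -> R -> R := fun _ _ => 1.

Lemma tps_one c t : tps [:: (c, one)] t = c.
Proof. by rewrite /tps big_seq1 /= big1 ?mulr1. Qed.

Lemma val_one n c : val n [:: (c, one)] = c.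
Proof.
rewrite /val big_seq1 /= big1 ?mulr1 // => k _.
by case: ifP => // _; rewrite /one avgf_cst.
Qed.

Lemma allc_one c : allc [:: (c, one)].
Proof. by split => // k; exact: cst_continuous. Qed.

Lemma tps_flatten (I : Type) (r : seq I) (S : I -> seq term) t :
  tps (flatten (map S r)) t = \sum_(i <- r) tps (S i) t.
Proof.
elim: r => [|i r IH] /=; first by rewrite /tps !big_nil.
by rewrite tps_cat IH big_cons.
Qed.

Lemma val_flatten n (I : Type) (r : seq I) (S : I -> seq term) :
  val n (flatten (map S r)) = \sum_(i <- r) val n (S i).
Proof.
elim: r => [|i r IH] /=; first by rewrite /val !big_nil.
by rewrite val_cat IH big_cons.
Qed.

Lemma allc_flatten (I : Type) (r : seq I) (S : I -> seq term) :
  (forall i, allc (S i)) -> allc (flatten (map S r)).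
Proof.
move=> cS; elim: r => [//|i r IH] /=.
rewrite /allc in cS IH *; apply: allP_cat; [exact: cS|exact: IH].
Qed.

Lemma unif_avg_cst n (c : R) : unif_avg n (fun _ => c) = c.
Proof.
elim: n => [//|n IH]; rewrite unif_avgS.
under eq_fun do rewrite IH.
exact: avgf_cst.
Qed.
End Avg.

Section Channel2.
Variable R : realType.
Local Open Scope complex_scope.

Lemma cplx (c s c' s' : R) (q : R[i]) :
  complex.Re (conjc (c +i* s) * q * (c' +i* s')) =
  complex.Re q * (c * c' + s * s') - complex.Im q * (c * s' - s * c').
Proof. case: q => a b /=. ring. Qed.

Lemma quad_exp L (Q : 'M[R[i]]_L) (h : 'cV[R[i]]_L) :
  complex.Re (quadform Q h) =
  \sum_(j < L) \sum_(i < L) complex.Re (conjc (h i 0) * Q i j * h j 0).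
Proof.
rewrite /quadform mxE raddf_sum; apply: eq_bigr => j _.
rewrite mxE mulr_suml raddf_sum; apply: eq_bigr => i _.
by rewrite !mxE.
Qed.

Variable L : nat.

Definition mterm (i j : nat) (u v : R -> R) : nat -> R -> R :=
  fun k => if k == i then u else if k == j then v else (fun _ => 1).

Lemma prod_m (i j : 'I_L) u v (t : nat -> R) : i != j ->
  \prod_(k < L) mterm i j u v k (t k) = u (t i) * v (t j).
Proof.
move=> ij; rewrite (bigD1 i) //= /mterm eqxx (bigD1 j) 1?eq_sym //=.
have ij' : (i : nat) != j by [].
rewrite (ifN_eq _ _ ij') eqxx big1 ?mulr1 // => k /andP[ki kj].
have ki' : (k : nat) != i by [].
have kj' : (k : nat) != j by [].
by rewrite (ifN_eq _ _ ki') (ifN_eq _ _ kj').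
Qed.

Lemma allc_m i j u v : continuous u -> continuous v -> @allc R [:: (1, mterm i j u v)].
Proof.
move=> cu cv; split => // k /=; rewrite /mterm.
case: ifP => _ //; case: ifP => _ //; exact: cst_continuous.
Qed.

Lemma val_m (i j : 'I_L) (c : R) (u v : R -> R) : @avgf R u = 0 -> @val R L L [:: (c, mterm i j u v)] = 0.
Proof.
move=> u0; rewrite /val big_seq1 /= (bigD1 i) //= ltn_ord /mterm eqxx u0.
by rewrite mul0r mulr0.
Qed.
End Channel2.

Section Channel3.
Variable R : realType.
Local Open Scope complex_scope.
Variable L : nat.
Variables (b : bstate L) (Q : 'M[R[i]]_L).

Definition Sij (i j : 'I_L) : seq (term R) :=
  let bb := ((b i)%:R * (b j)%:R : R) in let q := Q i j in
  if i == j then [:: ((b i)%:R * complex.Re (Q i i), @one R)] else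
  [:: (bb * complex.Re q, @mterm R i j cos cos); (bb * complex.Re q, @mterm R i j sin sin);
      (- (bb * complex.Im q), @mterm R i j cos sin); (bb * complex.Im q, @mterm R i j sin cos)].

Lemma T_eq i j t :
  complex.Re (conjc (hvec b t i 0) * Q i j * hvec b t j 0) = @tps R L (Sij i j) t.
Proof.
rewrite /hvec !mxE /Sij; case: eqVneq => [<-|ij].
  rewrite tps_one; case: (b i) => /=.
    rewrite cplx; have := cos2Dsin2 (t i); rewrite !expr2 => ->.
    ring.
  by rewrite mulr0 raddf0 mul0r.
rewrite /tps !big_cons big_nil !prod_m //.
case: (b i); case: (b j) => /=.
- rewrite cplx; ring.
- rewrite mulr0 raddf0; ring.
- by case: (Q i j) => x y /=; ring.
- by case: (Q i j) => x y /=; ring.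
Qed.

Lemma cont_m (i j : nat) (u v : R -> R) k :
  continuous u -> continuous v -> continuous (@mterm R i j u v k).
Proof.
move=> cu cv; rewrite /mterm.
case: ifP => _ //; case: ifP => _ //; exact: cst_continuous.
Qed.

Lemma allc_S i j : @allc R (Sij i j).
Proof.
rewrite /Sij; case: eqP => _; first exact: allc_one.
have cc := continuous_cos; have cs := continuous_sin.
by split; [|split; [|split; [|split]]] => // k /=; apply: cont_m.
Qed.

Lemma val_m' (i j : 'I_L) (c : R) (u v : R -> R) : @avgf R u = 0 ->
  c * \prod_(k < L) (if (k < L)%N then @avgf R (@mterm R i j u v k) else @mterm R i j u v k 0) = 0.
Proof.
move=> u0; rewrite (bigD1 i) //= ltn_ord /mterm eqxx u0.
by rewrite mul0r mulr0.
Qed.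

Lemma val_Sij i j : @val R L L (Sij i j) = if i == j then (b i)%:R * complex.Re (Q i i) else 0.
Proof.
rewrite /Sij; case: eqP => _; first exact: val_one.
rewrite /val !big_cons big_nil /=.
rewrite (val_m' _ _ _ _ _ (@avgf_cos R)) (val_m' _ _ _ _ _ (@avgf_sin R)).
rewrite (val_m' _ _ _ _ _ (@avgf_cos R)) (val_m' _ _ _ _ _ (@avgf_sin R)).
by rewrite !add0r.
Qed.

Definition sX : seq (term R) :=
  flatten (map (fun j => flatten (map (fun i => Sij i j) (index_enum 'I_L))) (index_enum 'I_L)).

Lemma allc_sX : @allc R sX.
Proof. apply: allc_flatten => j; apply: allc_flatten => i; exact: allc_S. Qed.

Lemma Xeq t : complex.Re (quadform Q (hvec b t)) = @tps R L sX t.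
Proof.
rewrite quad_exp /sX tps_flatten; apply: eq_bigr => j _.
rewrite tps_flatten; apply: eq_bigr => i _; exact: T_eq.
Qed.

Lemma val_sX : @val R L L sX = \sum_(j < L) (b j)%:R * complex.Re (Q j j).
Proof.
rewrite /sX val_flatten; apply: eq_bigr => j _.
rewrite val_flatten.
rewrite (eq_bigr (fun i => if i == j then (b j)%:R * complex.Re (Q j j) else 0)); last first.
  by move=> i _; rewrite val_Sij; case: eqP => // ->.
by rewrite -big_mkcond big_pred1_eq.
Qed.
End Channel3.

Section Main.
Variable R : realType.
Local Open Scope complex_scope.

Lemma tangent (X a : R) : 0 <= X -> 0 <= a ->
  ln (1 + X) <= (ln (1 + a) - a / (1 + a)) + (1 + a)^-1 * X.
Proof.
move=> X0 a0.
have a1 : 0 < 1 + a by rewrite ltr_pwDl.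
have e : 1 + X = (1 + a) * (1 + (X - a) / (1 + a)).
  by field; rewrite gt_eqF.
have y1 : -1 < (X - a) / (1 + a).
  rewrite ltr_pdivlMr // mulN1r; lra.
have y0 : 0 < 1 + (X - a) / (1 + a) by lra.
rewrite e lnM ?posrE //.
have := le_ln1Dx y1.
have -> : (X - a) / (1 + a) = - (a / (1 + a)) + (1 + a)^-1 * X.
  by field; rewrite gt_eqF.
lra.
Qed.

Variable L : nat.

Lemma bound (b : bstate L) (Q : 'M[R[i]]_L) (P : R) : 0 <= P -> psd Q ->
  (forall l, Q l l <= P%:C) ->
  unif_avg L (fun th => ln (1 + complex.Re (quadform Q (hvec b th)))) <=
  ln (1 + (\sum_(l < L) (b l : nat))%:R * P).
Proof.
move=> P0 [_ psdQ] diagQ.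
set a := (\sum_(l < L) (b l : nat))%:R * P.
have a0 : 0 <= a by rewrite /a mulr_ge0.
have a1 : 0 < 1 + a by rewrite ltr_pwDl.
have X0 t : 0 <= complex.Re (quadform Q (hvec b t)).
  by have := psdQ (hvec b t); rewrite lecE => /andP[_]; rewrite /quadform.
pose sg := [:: (ln (1 + a) - a / (1 + a), @one R)] ++ @scale R ((1 + a)^-1) (@sX R L b Q).
apply: (le_trans (@avg_le R L L _ sg _ _ _)).
- rewrite /sg /allc; apply: allP_cat; first exact: allc_one.
  exact: allc_scale (@allc_sX R L b Q).
- by move=> t; apply: ln_ge0; rewrite lerDl.
- move=> t; rewrite /sg tps_cat tps_one tps_scale -Xeq.
  exact: tangent.
rewrite /sg val_cat val_one val_scale val_sX.
have V : \sum_(j < L) (b j)%:R * complex.Re (Q j j) <= a.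
  rewrite /a natr_sum mulr_suml; apply: ler_sum => j _.
  apply: ler_wpM2l; first by case: (b j).
  by have := diagQ j; rewrite lecE => /andP[_].
have : (1 + a)^-1 * \sum_(j < L) (b j)%:R * complex.Re (Q j j) <= (1 + a)^-1 * a.
  by rewrite ler_pM2l // invr_gt0.
rewrite mulrC -/(a / (1 + a)). lra.
Qed.
End Main.

Section Final.
Variable R : realType.
Local Open Scope complex_scope.

Lemma Q0_adm (L : nat) (P : R) : 0 <= P -> @admissible R L P (fun _ => (P%:C)%:M).
Proof.
move=> P0 b; split; last by move=> l; rewrite mxE eqxx mulr1n.
split.
  rewrite qualifE /= expr0 scale1r tr_scalar_mx map_scalar_mx/=.
  by apply/eqP; congr scalar_mx; symmetry; exact: (conjc_real P).
move=> v; rewrite mul_mx_scalar -scalemxAl mxE.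
apply: mulr_ge0; first by rewrite ler0c.
rewrite mxE; apply: sumr_ge0 => i _; rewrite !mxE mulrC.
exact: mulcJ_ge0.
Qed.

Lemma Q0_pt (L : nat) (P : R) (b : bstate L) t :
  complex.Re (quadform (P%:C)%:M (hvec b t)) = (\sum_(l < L) (b l : nat))%:R * P.
Proof.
rewrite quad_exp natr_sum mulr_suml; apply: eq_bigr => j _.
rewrite (bigD1 j) //= big1 ?addr0; last first.
  by move=> i ij; rewrite [X in _ * X * _]mxE (negbTE ij) mulr0n mulr0 mul0r raddf0.
rewrite T_eq /Sij eqxx tps_one mxE eqxx mulr1n /=.
done.
Qed.

Lemma Q0_rate (L : nat) (P pB : R) :
  @ergodic_rate R L pB (fun _ => (P%:C)%:M) = rhs_rate L pB P.
Proof.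
rewrite /ergodic_rate /rhs_rate; apply: eq_bigr => b _; congr (_ * _).
rewrite (@unif_avg_ext R L _ (fun _ => ln (1 + (\sum_(l < L) (b l : nat))%:R * P))).
  exact: unif_avg_cst.
by move=> t; rewrite Q0_pt.
Qed.
End Final.

Theorem proposition1 (R : realType) (L : nat) (P pB : R) :
  (1 <= L)%N -> 0 <= P -> 0 <= pB <= 1 ->
  sup [set @ergodic_rate R L pB Q | Q in [set Q | @admissible R L P Q]]
  = rhs_rate L pB P.
Proof.
move=> L1 P0 /andP[pB0 pB1].
set S := [set _ | _ in _].
have ub : ubound S (rhs_rate L pB P).
  move=> _ [Q adQ <-]; rewrite /ergodic_rate /rhs_rate; apply: ler_sum => b _.
  apply: ler_wpM2l.
    by apply: prodr_ge0 => l _; case: (b l) => //; rewrite subr_ge0.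
  by have [psdQ dQ] := adQ b; exact: bound.
have inS : S (rhs_rate L pB P).
  by exists (fun _ => ((P%:C)%C)%:M); [exact: Q0_adm | exact: Q0_rate].
apply/eqP; rewrite eq_le; apply/andP; split.
  by apply: ge_sup => //; exists (rhs_rate L pB P).
apply: sup_upper_bound => //; split; first by exists (rhs_rate L pB P).
by exists (rhs_rate L pB P).
Qed.
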